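(* Fix $k\ge2$, $c>0$ and $\zeta\in(0,1]$ with $\zeta(k-1)c^{k-1}<e$. Let $G=(V,E)$ be a finite $k$-uniform hypergraph with maximum degree at most $\Delta$ and let $F=F^G_{c,\zeta}$ (defined with this parameter $\Delta$). Then for all $\mathbf x,\mathbf y\in\mathbb R_{>0}^V$, $$\|\log F^2(\mathbf x)-\log F^2(\mathbf y)\|_\infty\le(1-\delta)\|\log\mathbf x-\log\mathbf y\|_\infty,\qquad \delta=1-\zeta c^{k-1}(k-1)e^{-1},$$ where $F^2=F\circ F$ and $\log$ is applied coordinatewise. In particular $F$ has a unique fixed point.
   Context: $F^G_{c,\zeta}:\mathbb R^V_{>0}\to\mathbb R^V_{>0}$ is given by $(F^G_{c,\zeta}(\mathbf x))_v=c\exp\left(-\frac{\zeta}{\Delta}\sum_{e\ni v}\prod_{u\in e\setminus\{v\}}x_u\right)$. *)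

(* Defs.v *)
From HB Require Import structures.
From mathcomp Require Import all_boot all_order all_algebra.
From mathcomp Require Import all_classical all_reals all_analysis.
Set Implicit Arguments. Unset Strict Implicit. Unset Printing Implicit Defensive.
Import Order.TTheory GRing.Theory Num.Theory.
Local Open Scope ring_scope.

Definition k_uniform (V : finType) (E : {set {set V}}) (k : nat) : Prop :=
  forall e, e \in E -> #|e| = k.

Definition max_degree_le (V : finType) (E : {set {set V}}) (Delta : nat) : Prop :=
  forall v : V, (#|[set e in E | v \in e]| <= Delta)%N.

Definition hyperF (R : realType) (V : finType) (E : {set {set V}}) (Delta : nat)
  (c zeta : R) (x : V -> R) : V -> R :=
  fun v => c * expR (- (zeta / Delta%:R) *
                     \sum_(e in E | v \in e) \prod_(u in e :\ v) x u).

Definition posvec (R : realType) (V : finType) (x : V -> R) : Prop :=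
  forall v, 0 < x v.

Definition logvec (R : realType) (V : finType) (x : V -> R) : V -> R :=
  fun v => ln (x v).

(* sup norm on R^V (finite V); equals 0 when V is empty *)
Definition supnorm (R : realType) (V : finType) (f : V -> R) : R :=
  \big[Num.max/0]_(v : V) `|f v|.

(* Main.v *)
Require Import Defs.
From HB Require Import structures.
From mathcomp Require Import all_boot all_order all_algebra.
From mathcomp Require Import all_classical all_reals all_analysis.
Import Order.TTheory GRing.Theory Num.Theory.
Import numFieldNormedType.Exports.
From mathcomp Require Import ring lra.
Local Open Scope ring_scope.

Section Sc.
Variable R : realType.

Lemma uexp_le (u : R) : 0 <= u -> u * expR (- u) <= (expR 1)^-1.
Proof.
move=> u0.
have h := expR_ge1Dx (u - 1).
rewrite addrC subrK expRD expRN in h.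
rewrite expRN.
rewrite -(@ler_pM2r _ (expR u)) ?expR_gt0 //.
rewrite -mulrA mulVf ?gt_eqF ?expR_gt0 // mulr1.
by rewrite mulrC.
Qed.

Definition gg (t : R) := expR (- expR t).

Lemma gg_derive (t : R) : is_derive t 1 gg (- (expR t * expR (- expR t))).
Proof.
rewrite /gg.
have h1 : is_derive t 1 (fun s : R => - expR s) (- expR t).
  by apply: is_deriveN; exact: is_derive_expR.
have := is_derive1_comp (f := expR) (g := fun s : R => - expR s) (is_derive_expR _) h1.
by rewrite mulrN mulrC.
Qed.

Lemma gg_cont : continuous (fun t : R => expR (- expR t)).
Proof.
move=> t; apply: continuous_comp; last exact: continuous_expR.
apply: continuous_comp; first exact: continuous_expR.
exact: continuousN.
Qed.

Lemma expdiff (A B m : R) : 0 <= A -> 0 <= B -> 0 <= m ->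
  B <= expR m * A -> A <= expR m * B ->
  `|expR (- A) - expR (- B)| <= m / expR 1.
Proof.
wlog AB : A B / A <= B.
  move=> W A0 B0 m0 h1 h2; have [|BA] := leP A B; first by move=> ?; exact: W.
  by rewrite distrC; apply: W => //; exact: ltW.
move=> A0 B0 m0 h1 h2.
have mdiv : 0 <= m / expR 1 by rewrite divr_ge0 // ltW // expR_gt0.
have [Az|Apos] := eqVneq A 0.
  have Bz : B = 0 by apply/eqP; rewrite eq_le B0 andbT; move: h1; rewrite Az mulr0.
  by rewrite Az Bz subrr normr0.
have Ap : 0 < A by rewrite lt_def Apos A0.
have Bp : 0 < B by exact: lt_le_trans AB.
have [AeB|AneB] := eqVneq A B; first by rewrite AeB subrr normr0.
have AltB : A < B by rewrite lt_def eq_sym AneB AB.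
have lnlt : ln A < ln B by rewrite ltr_ln ?posrE.
have hA : expR (- A) = expR (- expR (ln A)) by rewrite lnK ?posrE.
have hB : expR (- B) = expR (- expR (ln B)) by rewrite lnK ?posrE.
have [t _ ht] := MVT lnlt (fun x _ => gg_derive x) (continuous_subspaceT gg_cont).
rewrite hA hB distrC.
rewrite ht normrM normrN; rewrite (ger0_norm (x := expR t * _)); last by rewrite mulr_ge0 // ltW // expR_gt0.
rewrite ger0_norm; last by rewrite subr_ge0 ltW.
rewrite [m / _]mulrC; apply: ler_pM => //.
- by rewrite subr_ge0 ltW.
- by apply: uexp_le; rewrite ltW // expR_gt0.
- have : ln B <= ln (expR m * A) by rewrite ler_ln ?posrE // mulr_gt0 // expR_gt0.
  by rewrite lnM ?posrE ?expR_gt0 // expRK lerBlDr addrC.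
Qed.
End Sc.

Definition RV (R : realType) (n : nat) := 'rV[R]_n.
HB.instance Definition _ (R : realType) (n : nat) := NormedModule.copy (RV R n) 'rV[R]_n.
HB.instance Definition _ (R : realType) (n : nat) := Complete.copy (RV R n) 'rV[R]_n.

Lemma RV_le_norm (R : realType) n (t : RV R n) i : `|t ord0 i| <= `|t|.
Proof.
by rewrite [leRHS]/Num.norm /= mx_normrE; apply/bigmax_geP; right => /=; exists (ord0, i).
Qed.

Lemma RV_norm_le (R : realType) n (t : RV R n) b : 0 <= b ->
  (forall i, `|t ord0 i| <= b) -> `|t| <= b.
Proof.
move=> b0 h; rewrite [leLHS]/Num.norm /= mx_normrE; apply/bigmax_leP; split => //.
by move=> [i j] _ /=; rewrite (ord1 i).
Qed.

Section Hyp.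
Variables (R : realType) (V : finType) (E : {set {set V}}) (Delta k : nat) (c zeta : R).
Hypotheses (k2 : (2 <= k)%N) (c0 : 0 < c) (z0 : 0 < zeta)
  (kun : k_uniform E k) (mdeg : max_degree_le E Delta) (D0 : (0 < Delta)%N).

Let F := hyperF E Delta c zeta.
Let S (x : V -> R) v := \sum_(e in E | v \in e) \prod_(u in e :\ v) x u.
Let a := zeta / Delta%:R.

Lemma a_ge0 : 0 <= a.
Proof. by rewrite divr_ge0 // ltW. Qed.

Lemma S_ge0 (x : V -> R) : posvec x -> forall v, 0 <= S x v.
Proof.
move=> px v; apply: sumr_ge0 => e _; apply: prodr_ge0 => u _; exact: ltW.
Qed.

Lemma F_pos (x : V -> R) : posvec (F x).
Proof. by move=> v; rewrite /F /hyperF mulr_gt0 // expR_gt0. Qed.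

Lemma lnF (x : V -> R) v : ln (F x v) = ln c - a * S x v.
Proof.
rewrite /F /hyperF lnM ?posrE ?expR_gt0 // expRK mulNr.
by [].
Qed.

Lemma ratio (x y : V -> R) d : posvec x -> posvec y ->
  (forall w, `|ln (x w) - ln (y w)| <= d) -> forall w, y w <= expR d * x w.
Proof.
move=> px py h w.
have := h w; rewrite ler_norml => /andP[h1 _].
rewrite -(lnK (px w)) -(lnK (py w)) ?posrE // -expRD ler_expR.
lra.
Qed.

Lemma prod_ratio (x y : V -> R) d : posvec x -> posvec y ->
  (forall w, `|ln (x w) - ln (y w)| <= d) -> forall e v, e \in E -> v \in e ->
  \prod_(u in e :\ v) y u <= expR ((k.-1)%:R * d) * \prod_(u in e :\ v) x u.
Proof.
move=> px py h e v eE ve.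
have card : #|e :\ v| = k.-1.
  by have := cardsD1 v e; rewrite ve kun // add1n => ->.
apply: (@le_trans _ _ (\prod_(u in e :\ v) (expR d * x u))).
  apply: ler_prod => u _; rewrite ltW //=; exact: ratio.
by rewrite big_split /= prodr_const card expRM_natl.
Qed.

Lemma S_ratio (x y : V -> R) d : posvec x -> posvec y ->
  (forall w, `|ln (x w) - ln (y w)| <= d) -> forall v,
  S y v <= expR ((k.-1)%:R * d) * S x v.
Proof.
move=> px py h v; rewrite /S mulr_sumr; apply: ler_sum => e /andP[eE ve].
exact: prod_ratio.
Qed.

Lemma prodF (x : V -> R) e v : e \in E -> v \in e ->
  \prod_(u in e :\ v) F x u = c ^+ k.-1 * expR (- \sum_(u in e :\ v) (a * S x u)).
Proof.
move=> eE ve.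
have card : #|e :\ v| = k.-1.
  by have := cardsD1 v e; rewrite ve kun // add1n => ->.
rewrite /F /hyperF big_split /= prodr_const card; congr (_ * _).
by rewrite -sumrN expR_sum; apply: eq_bigr => u _; rewrite mulNr.
Qed.


Definition Lc := zeta * c ^+ k.-1 * (k.-1)%:R / expR 1.

Lemma core (x y : V -> R) d : posvec x -> posvec y ->
  (forall w, `|ln (x w) - ln (y w)| <= d) -> forall v,
  `|ln (F (F x) v) - ln (F (F y) v)| <= Lc * d.
Proof.
move=> px py h v.
have d0 : 0 <= d := le_trans (normr_ge0 _) (h v).
have h' : forall w, `|ln (y w) - ln (x w)| <= d by move=> w; rewrite distrC.
set m := (k.-1)%:R * d.
have m0 : 0 <= m by rewrite mulr_ge0 // ler0n.
rewrite !lnF.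
have -> : ln c - a * S (F x) v - (ln c - a * S (F y) v) = a * (S (F y) v - S (F x) v)
  by ring.
rewrite normrM (ger0_norm a_ge0).
have C0 : 0 <= c ^+ k.-1 * (m / expR 1).
  by apply: mulr_ge0; [exact: exprn_ge0 (ltW c0) | rewrite divr_ge0 // ltW // expR_gt0].
have key : `|S (F y) v - S (F x) v| <= (c ^+ k.-1 * (m / expR 1)) *+ #|[set e in E | v \in e]|.
  rewrite /S -sumrB.
  apply: le_trans (ler_norm_sum _ _ _) _.
  rewrite (eq_bigl (fun e => e \in [set e in E | v \in e])); last by move=> e; rewrite inE.
  rewrite -sumr_const; apply: ler_sum => e; rewrite inE => /andP[eE ve].
  rewrite !prodF // -mulrBr normrM (ger0_norm (exprn_ge0 _ (ltW c0))).
  apply: ler_wpM2l; first exact: exprn_ge0 (ltW c0).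
  apply: expdiff => //.
  - apply: sumr_ge0 => u _; apply: mulr_ge0; [exact: a_ge0 | exact: S_ge0 py u].
  - apply: sumr_ge0 => u _; apply: mulr_ge0; [exact: a_ge0 | exact: S_ge0 px u].
  - rewrite mulr_sumr; apply: ler_sum => u _; rewrite mulrCA; apply: ler_wpM2l; first exact: a_ge0.
    exact: S_ratio.
  - rewrite mulr_sumr; apply: ler_sum => u _; rewrite mulrCA; apply: ler_wpM2l; first exact: a_ge0.
    exact: S_ratio.
apply: le_trans (ler_wpM2l a_ge0 key) _.
have hd := mdeg v.
rewrite -mulr_natr.
apply: (@le_trans _ _ (a * (c ^+ k.-1 * (m / expR 1) * Delta%:R))).
  by apply: (ler_wpM2l a_ge0); apply: (ler_wpM2l C0); rewrite ler_nat.
rewrite le_eqVlt; apply/orP; left; apply/eqP; rewrite /a /m /Lc.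
have D0' : Delta%:R != 0 :> R by rewrite pnatr_eq0 -lt0n.
have e0 : expR 1 != 0 :> R by rewrite gt_eqF // expR_gt0.
by field; rewrite e0 D0'.
Qed.


Lemma supnorm_le (f : V -> R) b : 0 <= b -> (forall v, `|f v| <= b) -> supnorm f <= b.
Proof. by move=> b0 h; rewrite /supnorm; apply/bigmax_leP; split. Qed.

Lemma le_supnorm (f : V -> R) v : `|f v| <= supnorm f.
Proof. exact: le_bigmax. Qed.

Lemma supnorm_ge0 (f : V -> R) : 0 <= supnorm f.
Proof.
rewrite /supnorm; apply: (big_ind (fun x => 0 <= x)) => //.
by move=> x y x0 y0; rewrite le_max x0.
Qed.

Lemma Lc_ge0 : 0 <= Lc.
Proof.
rewrite /Lc; apply: divr_ge0; last exact: ltW (expR_gt0 _).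
apply: mulr_ge0; last exact: ler0n.
apply: mulr_ge0; [exact: ltW | exact: exprn_ge0 (ltW c0)].
Qed.

Lemma contr (x y : V -> R) : posvec x -> posvec y ->
  supnorm (fun v => logvec (F (F x)) v - logvec (F (F y)) v)
  <= Lc * supnorm (fun v => logvec x v - logvec y v).
Proof.
move=> px py; apply: supnorm_le.
  by rewrite mulr_ge0 ?Lc_ge0 ?supnorm_ge0.
move=> v; apply: core => // w.
exact: (le_supnorm (fun v => logvec x v - logvec y v) w).
Qed.

Hypothesis Lc1 : Lc < 1.

Lemma uniq2 (x y : V -> R) : posvec x -> posvec y -> F (F x) = x -> F (F y) = y -> x = y.
Proof.
move=> px py fx fy.
have := contr x y px py; rewrite fx fy.
set d := supnorm _ => hd.
have d0 : 0 <= d := supnorm_ge0 _.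
have L0 := Lc_ge0.
have dz : d <= 0.
  have h1 : (1 - Lc) * d <= 0 by rewrite mulrBl mul1r subr_le0.
  by rewrite pmulr_rle0 ?subr_gt0 in h1.
apply: funext => v.
have := le_supnorm (fun v => logvec x v - logvec y v) v; rewrite -/d => hv.
have : ln (x v) = ln (y v).
  apply/eqP; rewrite -subr_eq0 -normr_le0; exact: le_trans hv dz.
by move=> e; rewrite -(lnK (px v)) -(lnK (py v)) ?posrE // e.
Qed.


Definition toV (t : RV R #|V|) : V -> R := fun v => expR (t ord0 (enum_rank v)).
Definition G (t : RV R #|V|) : RV R #|V| := \row_i ln (F (F (toV t)) (enum_val i)).

Lemma toV_pos t : posvec (toV t).
Proof. by move=> v; rewrite /toV expR_gt0. Qed.

Lemma G_contr (t s : RV R #|V|) : `|G t - G s| <= Lc * `|t - s|.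
Proof.
apply: RV_norm_le; first by rewrite mulr_ge0 ?Lc_ge0 ?normr_ge0.
move=> i; rewrite !mxE.
apply: core; try exact: toV_pos.
move=> w; rewrite /toV !expRK.
by have := @RV_le_norm R _ (t - s) (enum_rank w); rewrite !mxE.
Qed.

Lemma exists_fix : exists2 x, posvec x & F (F x) = x.
Proof.
have Lc0 := Lc_ge0.
have ctr : is_contraction (totalfun_ setT G : {fun [set: RV R #|V|] >-> [set: RV R #|V|]}).
  exists (NngNum Lc0); split => //=.
  by move=> [t s] _ /=; exact: G_contr.
have [p _ hp] := banach_fixed_point ctr closedT (ex_intro _ 0 I).
exists (toV p); first exact: toV_pos.
apply: funext => v.
have e : p ord0 (enum_rank v) = ln (F (F (toV p)) v).
  by rewrite {1}hp /= mxE enum_rankK.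
by rewrite {2}/toV e lnK // posrE; apply: F_pos.
Qed.

Lemma main_sec :
  (forall x y : V -> R, posvec x -> posvec y ->
     supnorm (fun v => logvec (F (F x)) v - logvec (F (F y)) v)
     <= Lc * supnorm (fun v => logvec x v - logvec y v))
  /\ (exists x : V -> R, posvec x /\ F x = x /\
        forall y : V -> R, posvec y -> F y = y -> y = x).
Proof.
split; first exact: contr.
have [x px fx] := exists_fix.
exists x; split => //; split.
  apply: uniq2 => //; first exact: F_pos.
  by rewrite fx.
by move=> y py fy; apply: uniq2 => //; rewrite !fy.
Qed.

End Hyp.

Theorem mainTheorem12 (R : realType) (k : nat) (c zeta : R)
  (V : finType) (E : {set {set V}}) (Delta : nat) :
  (2 <= k)%N -> 0 < c -> 0 < zeta -> zeta <= 1 ->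
  zeta * (k.-1)%:R * c ^+ k.-1 < expR 1 ->
  k_uniform E k -> max_degree_le E Delta -> (0 < Delta)%N ->
  let F := hyperF E Delta c zeta in
  let delta := 1 - zeta * c ^+ k.-1 * (k.-1)%:R / expR 1 in
  (forall x y : V -> R, posvec x -> posvec y ->
     supnorm (fun v => logvec (F (F x)) v - logvec (F (F y)) v)
     <= (1 - delta) * supnorm (fun v => logvec x v - logvec y v))
  /\ (exists x : V -> R, posvec x /\ F x = x /\
        forall y : V -> R, posvec y -> F y = y -> y = x).
Proof.
move=> k2 c0 z0 _ hlt kun mdeg D0 F delta.
have Lc1 : @Lc R k c zeta < 1.
  rewrite /Lc ltr_pdivrMr ?expR_gt0 // mul1r.
  by move: hlt; rewrite -mulrA [_ * c ^+ _]mulrC mulrA.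
have -> : 1 - delta = @Lc R k c zeta by rewrite /delta /Lc; ring.
exact: main_sec.
Qed.
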